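(* Fix an integer $k\ge 3$, and let $N$ range over positive integers divisible by $\mathrm{lcm}\{2,k\}$. Let $\alpha$ be a random permutation uniformly distributed on the conjugacy class $[2^{N/2}]$ of the symmetric group $S_N$, and let $\beta$ be a fixed permutation in the conjugacy class $[k^{N/k}]$. Then, as $N\to\infty$, $$\Pr[C_{\alpha\beta}\ge t] = O\left(\left(\tfrac{2}{3}\right)^{t/2} N\right),$$ with the implied constant independent of $N$ and $t$.
   Context: For a permutation $\pi$ of $\{1,\ldots,N\}$, $C_\pi$ denotes the number of cycles of $\pi$. The conjugacy class $[2^{N/2}]$ consists of the permutations of $\{1,\ldots,N\}$ all of whose cycles have length $2$; $[k^{N/k}]$ consists of the permutations all of whose cycles have length $k$. The product $\alpha\beta$ denotes the permutation obtained by first performing $\alpha$ and then $\beta$. *)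

(* Defs.v *)
From mathcomp Require Import all_boot all_order all_algebra all_fingroup.
Set Implicit Arguments. Unset Strict Implicit. Unset Printing Implicit Defensive.
Import Order.TTheory GRing.Theory Num.Theory.

(* s lies in the conjugacy class [m^{N/m}] of S_N: every cycle of s
   (= every orbit of <s> on {0,..,N-1}) has length exactly m. *)
Definition all_cycles_length (N m : nat) (s : {perm 'I_N}) : bool :=
  [forall x : 'I_N, #|porbit s x| == m].

Definition ncycles (N : nat) (s : {perm 'I_N}) : nat := #|porbits s|.

Definition unif_prob (R : numFieldType) (T : finType) (A : {set T}) (E : pred T) : R :=
  (#|[set x in A | E x]|%:R / #|A|%:R)%R.

(* Main.v *)
Require Import Defs.
From mathcomp Require Import all_boot all_order all_algebra all_fingroup.
From mathcomp Require Import zify ring lra.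
Set Implicit Arguments. Unset Strict Implicit. Unset Printing Implicit Defensive.
Import Order.TTheory GRing.Theory Num.Theory.

Section Comb.
Variable T : finType.

Definition MV (V : {set T}) : {set {perm T}} :=
  [set a : {perm T} | [forall z, if z \in V then (a z != z) && (a (a z) == z) else a z == z]].

Definition f1 (s : {perm T}) := #|[set z | s z == z]|.
Definition CC (s : {perm T}) := #|porbits s|.

Lemma MVP (V : {set T}) (a : {perm T}) : reflect (forall z, if z \in V then (a z != z) && (a (a z) == z) else a z == z) (a \in MV V).
Proof. by rewrite inE; apply: forallP. Qed.

Lemma MV_in (V : {set T}) (a : {perm T}) z : a \in MV V -> z \in V -> a z \in V.
Proof.
move=> /MVP H zV; have := H z; rewrite zV => /andP[nz /eqP aaz].
case: ifP (H (a z)) => // _ /eqP h; by rewrite aaz in h; rewrite -h eqxx in nz.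
Qed.

Lemma MV_out (V : {set T}) (a : {perm T}) z : a \in MV V -> z \notin V -> a z = z.
Proof. by move=> /MVP H zV; have := H z; rewrite (negbTE zV) => /eqP. Qed.

Lemma MV_inv (V : {set T}) (a : {perm T}) z : a \in MV V -> a (a z) = z.
Proof.
move=> aM; case: (boolP (z \in V)) => zV.
  by have := (MVP _ _ aM) z; rewrite zV => /andP[_ /eqP].
by rewrite !(MV_out aM zV).
Qed.

Lemma MV_tperm (V : {set T}) u v (a : {perm T}) : u \in V -> v \in V -> u != v ->
  ((a * tperm u v)%g \in MV V) && ((a * tperm u v)%g v == u) = (a \in MV (V :\: [set u; v])).
Proof.
move=> uV vV nuv.
have nvu : v != u by rewrite eq_sym.
apply/idP/idP.
- case/andP=> aM /eqP avu.
  have ea : a = ((a * tperm u v) * tperm u v)%g by rewrite -mulgA tperm2 mulg1.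
  set b := (a * tperm u v)%g in aM avu ea.
  have bu : b u = v by rewrite -avu (MV_inv _ aM).
  have az w : a w = tperm u v (b w) by rewrite {1}ea permM.
  apply/MVP => z; rewrite !az !inE.
  case: (eqVneq z u) => [->|nzu]; first by rewrite bu tpermR /=.
  case: (eqVneq z v) => [->|nzv]; first by rewrite avu tpermL /=.
  case: (boolP (z \in V)) => zV /=; last by rewrite (MV_out aM zV) tpermD // eq_sym.
  have bzV := MV_in aM zV.
  have nbzu : b z != u by apply: contra nzv => /eqP h; apply/eqP; apply: (perm_inj (s:=b)); rewrite h avu.
  have nbzv : b z != v by apply: contra nzu => /eqP h; apply/eqP; apply: (perm_inj (s:=b)); rewrite h bu.
  rewrite tpermD 1?eq_sym //.
  have := (MVP _ _ aM) z; rewrite zV => /andP[nbz /eqP ->].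
  by rewrite eq_sym nbz /= tpermD // eq_sym.
- move=> aM.
  have aMi z : a (a z) = z by apply: MV_inv aM.
  have au : a u = u by apply: (MV_out aM); rewrite !inE eqxx.
  have av : a v = v by apply: (MV_out aM); rewrite !inE eqxx orbT.
  rewrite permM av tpermR eqxx andbT.
  apply/MVP => z; rewrite !permM.
  case: (eqVneq z u) => [->|nzu]; first by rewrite uV au tpermL av tpermR eqxx nvu.
  case: (eqVneq z v) => [->|nzv]; first by rewrite vV av tpermR au tpermL eqxx nuv.
  case: (boolP (z \in V)) => zV.
    have zV' : z \in V :\: [set u; v] by rewrite !inE (negbTE nzu) (negbTE nzv).
    have := (MVP _ _ aM) z; rewrite zV' => /andP[nz _].
    have azV := MV_in aM zV'.
    move: azV; rewrite !inE => /andP[/norP[nazu nazv] _].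
    have h1 : tperm u v (a z) = a z by rewrite tpermD // eq_sym.
    have nuz : u != z by rewrite eq_sym.
    have nvz : v != z by rewrite eq_sym.
    by rewrite h1 nz aMi (tpermD nuz nvz) eqxx.
  have zV' : z \notin V :\: [set u; v] by rewrite !inE negb_and zV orbT.
  have nuz : u != z by rewrite eq_sym.
  have nvz : v != z by rewrite eq_sym.
  by rewrite (MV_out aM zV') (tpermD nuz nvz).
Qed.


Lemma MV_partition (R : nmodType) (F : {perm T} -> R) (V : {set T}) v : v \in V ->
  (\sum_(a in MV V) F a =
  \sum_(u in V :\ v) \sum_(a in MV (V :\: [set u; v])) F (a * tperm u v)%g)%R.
Proof.
move=> vV.
rewrite (partition_big (fun a : {perm T} => a v) (mem (V :\ v))) /=; last first.
  move=> a aM; rewrite !inE (MV_in aM vV) andbT.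
  by have := (MVP _ _ aM) v; rewrite vV => /andP[].
apply: eq_bigr => u; rewrite !inE => /andP[nuv uV].
rewrite (reindex_inj (mulIg (tperm u v))) /=.
by apply: eq_bigl => a; rewrite MV_tperm.
Qed.


Lemma card2 (V : {set T}) u v : u \in V -> v \in V -> u != v -> #|V :\: [set u; v]| = #|V| - 2.
Proof.
move=> uV vV nuv.
have -> : V :\: [set u; v] = V :\ v :\ u.
  by apply/setP => z; rewrite !inE; case: (z == u); case: (z == v).
rewrite (cardsD1 v V) vV (cardsD1 u (V :\ v)) !inE nuv uV /=.
by rewrite add1n add1n subn2.
Qed.

Lemma MV0 : MV set0 = [set 1%g].
Proof.
apply/setP => a; rewrite !inE; apply/forallP/eqP => [H|->].
  by apply/permP => z; have := H z; rewrite inE perm1 => /eqP.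
by move=> z; rewrite inE perm1.
Qed.

End Comb.

Fixpoint mm n := match n with 0 => 1 | 1 => 0 | m.+2 => m.+1 * mm m end.

Lemma mmS n : 0 < n -> mm n = n.-1 * mm n.-2.
Proof. by case: n => [|[|m]]. Qed.


Section Card.
Variables (T : finType) (R : numDomainType).

Lemma card_MV_aux n (V : {set T}) : #|V| <= n -> ((#|MV V|)%:R = (mm #|V|)%:R :> R)%R.
Proof.
elim: n V => [|n IH] V hV.
  move: hV; rewrite leqn0 cards_eq0 => /eqP ->.
  by rewrite MV0 cards1 cards0.
case: (set_0Vmem V) => [->|[v vV]]; first by rewrite MV0 cards1 cards0.
have -> : ((#|MV V|)%:R = \sum_(a in MV V) (1 : R) :> R)%R by rewrite sumr_const.
rewrite (MV_partition (fun _ => 1%R) vV).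
have e : forall u, u \in V :\ v -> (\sum_(a in MV (V :\: [set u; v])) (1:R) = (mm (#|V| - 2))%:R)%R.
  move=> u; rewrite !inE => /andP[nuv uV].
  rewrite sumr_const IH ?card2 //.
  move: hV; rewrite (cardsD1 v V) vV (cardsD1 u (V :\ v)) !inE nuv uV /=.
  by rewrite !add1n subn2 /= => h; apply: ltnW.
rewrite (eq_bigr _ e) sumr_const -mulrnA; congr (GRing.natmul _ _).
have c0 : 0 < #|V| by apply/card_gt0P; exists v.
rewrite (mmS c0) mulnC; congr (_ * _).
  by rewrite (cardsD1 v V) vV add1n.
by rewrite subn2.
Qed.

Lemma card_MV (V : {set T}) : ((#|MV V|)%:R = (mm #|V|)%:R :> R)%R.
Proof. exact: (card_MV_aux (leqnn _)). Qed.

End Card.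

Section Splice.
Variables (T : finType) (bt : {perm T}) (u v : T).
Hypothesis nuv : u != v.

Definition b1 := (tperm u v * bt)%g.
Definition b2 := (b1 * tperm u (b1 u))%g.
Definition b3 := (b2 * tperm v (b2 v))%g.

Lemma CC_mul_tperm (p : {perm T}) z : CC (p * tperm z (p z))%g = CC p + (p z != z).
Proof.
rewrite /CC -(porbitsV (p * _)%g) invMg tpermV.
have := porbits_mul_tperm p^-1 z (p z).
have -> : z \in porbit p^-1 (p z).
  by have := mem_porbit p^-1 1 (p z); rewrite expg1 permK.
by rewrite /= addn0 porbitsV eq_sym.
Qed.

Lemma b1u : b1 u = bt v. Proof. by rewrite permM tpermL. Qed.
Lemma b1v : b1 v = bt u. Proof. by rewrite permM tpermR. Qed.
Lemma b2u : b2 u = u. Proof. by rewrite permM tpermR. Qed.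
Lemma b3u : b3 u = u.
Proof.
rewrite permM b2u tpermD // eq_sym //.
apply: contra nuv => /eqP h; apply/eqP; apply: (perm_inj (s := b2)); by rewrite b2u.
Qed.
Lemma b3v : b3 v = v. Proof. by rewrite permM tpermR. Qed.

Lemma b3E z : b3 z = tperm v (tperm u (bt v) (bt u)) (tperm u (bt v) (bt (tperm u v z))).
Proof. by rewrite /b3 /b2 /b1 !permM tpermL tpermR. Qed.

Lemma CC_rel (a : {perm T}) : a u = u -> a v = v ->
  CC (a * b3)%g = CC (a * b1)%g + (b1 u != u) + (b2 v != v).
Proof.
move=> au av.
have h2 : (a * b2)%g = ((a * b1) * tperm u ((a * b1)%g u))%g by rewrite permM au -mulgA.
have h3 : (a * b3)%g = ((a * b2) * tperm v ((a * b2)%g v))%g by rewrite permM av -mulgA.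
rewrite h3 CC_mul_tperm h2 CC_mul_tperm.
by rewrite !permM au av -/b2 -[(a * b1)%g]/(a * b1)%g.
Qed.


Local Notation bti := (bt^-1)%g.

Lemma neq_inv (z w : T) : (bt z != w) = (z != bti w).
Proof. by rewrite -{1}(permKV bt w) (inj_eq perm_inj). Qed.

Lemma b3_out z : z \notin [set u; v; bti u; bti v] -> b3 z = bt z.
Proof.
rewrite !inE => /norP[/norP[/norP[nzu nzv] nza] nzc].
rewrite b3E (tpermD (x:=u) (y:=v)) 1?eq_sym //.
have h1 : u != bt z by rewrite eq_sym neq_inv.
have h2 : bt v != bt z by rewrite (inj_eq perm_inj) eq_sym.
have h3 : v != bt z by rewrite eq_sym neq_inv.
rewrite (tpermD h1 h2) tpermD //.
by case: tpermP => [_|_|_ _] //; rewrite (inj_eq perm_inj) eq_sym.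
Qed.

Lemma b3_fix_out (V : {set T}) : (forall z, z \notin V -> bt z = z) -> u \in V -> v \in V ->
  forall z, z \notin V :\: [set u; v] -> b3 z = z.
Proof.
move=> hV uV vV z; rewrite !inE negb_and negbK.
case: (eqVneq z u) => [->|nzu]; first by rewrite b3u.
case: (eqVneq z v) => [->|nzv]; first by rewrite b3v.
move=> /= zV.
have aV w : w \in V -> bti w \in V.
  move=> wV; apply/negPn/negP => h; move: (hV _ h); rewrite permKV => e.
  by move: wV; rewrite {1}e (negbTE h).
rewrite b3_out ?hV //.
rewrite !inE (negbTE nzu) (negbTE nzv) /=; apply/norP; split; apply/eqP => e.
  by move: (aV _ uV); rewrite -e (negbTE zV).
by move: (aV _ vV); rewrite -e (negbTE zV).
Qed.


Lemma card2le (a b : T) : #|[set a; b]| <= 2.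
Proof. by rewrite cards2; case: (a != b). Qed.

Lemma card4 (a b c d : T) : #|[set a; b; c; d]| <= 4.
Proof.
have h (A : {set T}) (x : T) : #|A :|: [set x]| <= #|A| + 1.
  by rewrite -(cards1 x); exact: (leq_card_setU _ _).1.
apply: leq_trans (h _ _) _; rewrite -[4]/(3+1) leq_add2r.
apply: leq_trans (h _ _) _; rewrite -[3]/(2+1) leq_add2r.
exact: card2le.
Qed.

Definition SS := [set u; v; bti u; bti v].
Definition XX := [set z in SS | (b3 z == z) && (bt z != z)].
Definition BB := [set bt v; bti v; bt (bt v); bti (bti v)].

Lemma f1_le : f1 b3 <= f1 bt + #|XX|.
Proof.
apply: leq_trans (leq_card_setU _ _).1.
apply: subset_leq_card; apply/subsetP => z; rewrite !inE => /eqP hz.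
case: (eqVneq (bt z) z) => //= hb.
rewrite hz eqxx !andbT.
apply: contraT => hS; have := b3_out (z:=z); rewrite !inE => /(_ hS) e.
by move: hb; rewrite -e hz eqxx.
Qed.

Lemma XX_sub (P : {set T}) : (forall z, z \in SS -> b3 z = z -> bt z != z -> z \in P) -> #|XX| <= #|P|.
Proof.
move=> H; apply: subset_leq_card; apply/subsetP => z; rewrite inE => /andP[zS /andP[/eqP h1 h2]].
exact: H.
Qed.

Lemma XX4 : #|XX| <= 4.
Proof. apply: leq_trans (card4 u v (bti u) (bti v)); apply: XX_sub => z zS _ _; exact: zS. Qed.

Lemma G_aux : #|XX| + 2 <= 2 * ((b1 u != u) + (b2 v != v)) + 4 * (u \in BB).
Proof.
have b2vE : b2 v = tperm u (bt v) (bt u) by rewrite /b2 permM b1v b1u.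
rewrite b1u b2vE.
have binv w : bti (bt w) = w by rewrite permK.
have inv_eq w z : (bt w = z) -> w = bti z by move=> <-; rewrite binv.
have SSE z : z \in SS -> [\/ z = u, z = v, z = bti u | z = bti v].
  by rewrite !inE -!orbA => /or4P[] /eqP ->; [constructor 1|constructor 2|constructor 3|constructor 4].
have nvu : v != u by rewrite eq_sym.
case: (eqVneq (bt v) v) => hv; case: (eqVneq (bt u) u) => hu.
-
  rewrite hv hu (negbTE nvu) tpermL eqxx /=.
  suff : #|XX| <= #|(set0 : {set T})| by rewrite cards0 leqn0 => /eqP ->.
  apply: XX_sub => z /SSE[] -> _; rewrite ?hu ?hv ?eqxx //.
    by rewrite -{2}(inv_eq _ _ hu) permKV eqxx.
  by rewrite -{2}(inv_eq _ _ hv) permKV eqxx.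
-
  have hbu : bt u != v by rewrite -{1}hv (inj_eq perm_inj).
  have tp : tperm u v (bt u) = bt u by rewrite tpermD // eq_sym.
  rewrite hv (negbTE nvu) tp hbu /=.
  suff : #|XX| <= 2 by lia.
  apply: leq_trans (card2le u (bti u)); apply: XX_sub => z /SSE[] -> _; rewrite ?hv ?eqxx //; rewrite !inE ?eqxx ?orbT //.
  by rewrite -{2}(inv_eq _ _ hv) permKV eqxx.
-
  have hd : bt v != u by rewrite -{1}hu (inj_eq perm_inj).
  rewrite hu tpermL hd hv /=.
  suff : #|XX| <= 2 by lia.
  apply: leq_trans (card2le v (bti v)); apply: XX_sub => z /SSE[] -> _; rewrite ?hu ?eqxx //; rewrite !inE ?eqxx ?orbT //.
  by rewrite -{2}(inv_eq _ _ hu) permKV eqxx.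
-
  case: (eqVneq (bt v) u) => hd.
  + have uB : u \in BB by rewrite !inE hd eqxx.
    rewrite hd tperm1 perm1 uB /=.
    case: (eqVneq (bt u) v) => hb.
    * 
      suff : #|XX| <= 2 by lia.
      apply: leq_trans (card2le u v); apply: XX_sub => z /SSE[] -> _ _; rewrite !inE ?eqxx ?orbT //.
        by rewrite -(inv_eq _ _ hd) eqxx orbT.
      by rewrite -(inv_eq _ _ hb) eqxx.
    * have := XX4; lia.
  + have tp : tperm u (bt v) (bt u) = bt u.
      by rewrite tpermD // 1?eq_sym // (inj_eq perm_inj) eq_sym.
    rewrite tp.
    case: (eqVneq (bt u) v) => hb.
    * have uB : u \in BB by rewrite !inE -(inv_eq _ _ hb) eqxx !orbT.
      rewrite uB; have := XX4; lia.
    * case: (boolP (u \in BB)) => uB; first by have := XX4; lia.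
      suff : #|XX| <= 2 by lia.
      apply: leq_trans (card2le u v); apply: XX_sub => z /SSE[] -> hz hzz; rewrite !inE ?eqxx ?orbT //.
        exfalso; move: hz; rewrite b3E tp.
        have n1 : u != bti u by rewrite -neq_inv.
        have n2 : v != bti u by rewrite -neq_inv.
        rewrite (tpermD n1 n2) permKV tpermL tpermD; first last.
          by rewrite (inj_eq perm_inj) eq_sym.
          by rewrite eq_sym.
        move=> e; move/negP: uB; apply; rewrite !inE e permKV eqxx.
        by rewrite !orbT.
      exfalso; move: hz; rewrite b3E tp.
      have n1 : u != bti v by rewrite -neq_inv.
      have n2 : v != bti v by rewrite -neq_inv.
      have t2 : tperm u (bt v) v = v by rewrite tpermD.
      rewrite (tpermD n1 n2) permKV t2 tpermL.
      move=> e; move/negP: uB; apply; rewrite !inE -e permK eqxx.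
      by rewrite !orbT.
Qed.


Lemma G_le : f1 b3 + 2 <= 2 * ((b1 u != u) + (b2 v != v)) + f1 bt + 4 * (u \in BB).
Proof. have := f1_le; have := G_aux; lia. Qed.

End Splice.

Section Main.
Local Open Scope ring_scope.
Variables (T : finType) (R : realFieldType) (y : R).
Hypothesis hy1 : 1 <= y.
Hypothesis hy4 : y ^+ 4 = 1 + 2^-1.

Lemma ypos : 0 < y. Proof. exact: lt_le_trans ltr01 hy1. Qed.

Lemma yexp_le m k : (m <= k)%N -> y ^+ m <= y ^+ k.
Proof. by move=> h; apply: (ler_weXn2l hy1). Qed.

Lemma CC_le (s : {perm T}) : (CC s <= #|T|)%N.
Proof. exact: leq_imset_card. Qed.

Lemma f1_1 : f1 (1%g : {perm T}) = #|T|.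
Proof. by rewrite /f1 -cardsT; apply: eq_card => z; rewrite !inE perm1 eqxx. Qed.

Lemma sumB (A : {set T}) (B : {set T}) : (#|B| <= 4)%N ->
  \sum_(u in A) ((u \in B)%:R : R) <= 4.
Proof.
move=> hB; rewrite (big_setID B) /= [X in _ + X]big1; last first.
  by move=> u; rewrite !inE => /andP[/negbTE -> _].
rewrite addr0 (eq_bigr (fun _ => 1)); last by move=> u; rewrite !inE => /andP[_ ->].
rewrite sumr_const -[4]/(4%:R : R) ler_nat.
apply: leq_trans hB; apply: subset_leq_card; exact: subsetIr.
Qed.


Lemma main_base (bt : {perm T}) : (forall z, z \notin set0 -> bt z = z) ->
  \sum_(a in MV set0) y ^+ (2 * CC (a * bt)%g) <= (mm #|(set0 : {set T})|)%:R * (#|(set0 : {set T})|.+1)%:R * y ^+ (f1 bt + #|T| - #|(set0 : {set T})|).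
Proof.
move=> hfix.
have bt1 : bt = 1%g by apply/permP => z; rewrite perm1 hfix // inE.
rewrite MV0 big_set1 mul1g bt1 cards0 f1_1 /= mul1r subn0.
rewrite mul1r; apply: yexp_le; have h := CC_le 1%g; by rewrite mul2n -addnn leq_add.
Qed.


Lemma arith1 (f3 f0 t N e B : nat) : (f3 + 2 <= 2 * e + f0 + 4 * B)%N -> (N <= t)%N -> (2 <= N)%N ->
  (f3 + t - (N - 2) <= 2 * e + (f0 + t - N) + 4 * B)%N.
Proof. lia. Qed.

Lemma key_step (V : {set T}) bt u v :
  u \in V -> v \in V -> u != v ->
  (\sum_(a in MV (V :\: [set u; v])) y ^+ (2 * CC (a * b3 bt u v)%g) <=
     (mm (#|V| - 2))%:R * (#|V| - 1)%:R * y ^+ (f1 (b3 bt u v) + #|T| - (#|V| - 2))) ->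
  \sum_(a in MV (V :\: [set u; v])) y ^+ (2 * CC (a * tperm u v * bt)%g) <=
     (mm (#|V| - 2))%:R * (#|V| - 1)%:R * y ^+ (f1 bt + #|T| - #|V|) * (1 + (u \in BB bt v)%:R / 2).
Proof.
move=> uV vV nuv IHa.
set W := V :\: [set u; v].
set e := ((b1 bt u v u != u) + (b2 bt u v v != v))%N.
have NT : (#|V| <= #|T|)%N := max_card _.
have N2 : (2 <= #|V|)%N.
  have := subset_leq_card (A := [set u; v]) (B := V); rewrite cards2 nuv; apply.
  by apply/subsetP => z; rewrite !inE => /orP[] /eqP ->.
have eq1 : (\sum_(a in MV W) y ^+ (2 * CC (a * tperm u v * bt)%g)) * y ^+ (2 * e)
     = \sum_(a in MV W) y ^+ (2 * CC (a * b3 bt u v)%g).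
  rewrite mulr_suml; apply: eq_bigr => a aM.
  have au : a u = u by apply: (MV_out aM); rewrite !inE eqxx.
  have av : a v = v by apply: (MV_out aM); rewrite !inE eqxx orbT.
  by rewrite (CC_rel bt au av) /b1 mulgA -exprD -mulnDr addnA.
have expo : y ^+ (f1 (b3 bt u v) + #|T| - (#|V| - 2)) <=
    y ^+ (2 * e) * (y ^+ (f1 bt + #|T| - #|V|) * (1 + (u \in BB bt v)%:R / 2)).
  have G := G_le bt nuv.
  have := arith1 G NT N2 => ar.
  set c := (_ + _ / 2).
  have -> : c = y ^+ (4 * (u \in BB bt v)).
    by rewrite /c; case: (u \in BB bt v); rewrite /= ?muln0 ?expr0 ?mul0r ?addr0 ?muln1 ?hy4 ?mul1r.
  rewrite -!exprD; apply: yexp_le; rewrite addnA; exact: ar.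
have y2e : 0 < y ^+ (2 * e) by apply: exprn_gt0; exact: ypos.
rewrite -(ler_pM2r y2e) eq1; apply: (le_trans IHa).
have -> : (mm (#|V| - 2))%:R * (#|V| - 1)%:R * y ^+ (f1 bt + #|T| - #|V|) * (1 + (u \in BB bt v)%:R / 2) * y ^+ (2 * e)
   = (mm (#|V| - 2))%:R * (#|V| - 1)%:R * (y ^+ (2 * e) * (y ^+ (f1 bt + #|T| - #|V|) * (1 + (u \in BB bt v)%:R / 2))) by ring.
by apply: ler_wpM2l => //; rewrite mulr_ge0 ?ler0n.
Qed.


Lemma main_aux n (V : {set T}) (bt : {perm T}) : (#|V| <= n)%N -> (forall z, z \notin V -> bt z = z) ->
  \sum_(a in MV V) y ^+ (2 * CC (a * bt)%g) <= (mm #|V|)%:R * (#|V|.+1)%:R * y ^+ (f1 bt + #|T| - #|V|).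
Proof.
elim: n V bt => [|n IH] V bt hV hfix.
  move: hV; rewrite leqn0 cards_eq0 => /eqP V0; subst V; exact: main_base.
case: (set_0Vmem V) => [V0|[v vV]]; first by subst V; exact: main_base.
rewrite (MV_partition (fun a => y ^+ (2 * CC (a * bt)%g)) vV).
have N1 : (1 <= #|V|)%N by apply/card_gt0P; exists v.
set K := (mm (#|V| - 2))%:R * (#|V| - 1)%:R * y ^+ (f1 bt + #|T| - #|V|).
have step : forall u, u \in V :\ v ->
    \sum_(a in MV (V :\: [set u; v])) y ^+ (2 * CC (a * tperm u v * bt)%g) <= K * (1 + (u \in BB bt v)%:R / 2).
  move=> u /setD1P[nuv uV].
  apply: key_step => //.
  have N2 : (2 <= #|V|)%N.
    have := subset_leq_card (A := [set u; v]) (B := V); rewrite cards2 nuv; apply.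
    by apply/subsetP => z; rewrite !inE => /orP[] /eqP ->.
  have := IH (V :\: [set u; v]) (b3 bt u v) _ (b3_fix_out nuv hfix uV vV).
  rewrite card2 //; have -> : (#|V| - 2).+1 = (#|V| - 1)%N by lia.
  apply; lia.
apply: le_trans (ler_sum _ step) _.
rewrite -mulr_sumr big_split /= sumr_const -mulr_suml.
have hB := sumB (V :\ v) (card4 (bt v) ((bt^-1)%g v) (bt (bt v)) ((bt^-1)%g ((bt^-1)%g v))).
have cV : #|V :\ v| = (#|V| - 1)%N by rewrite (cardsD1 v V) vV add1n subn1.
have Kge : 0 <= K by rewrite /K !mulr_ge0 ?ler0n // exprn_ge0 // ltW // ypos.
apply: le_trans (ler_wpM2l Kge (_ : _ <= (#|V|.+1)%:R)) _.
  rewrite cV.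
  have -> : (#|V|.+1)%:R = ((#|V| - 1)%N%:R + 2 : R) by rewrite -natrD; congr (_%:R); lia.
  rewrite lerD2l ler_pdivrMr ?ltr0n //.
  apply: le_trans hB _; lra.
rewrite (mmS N1) -subn1 natrM /K subn1 -subn2 le_eqVlt; apply/orP; left; apply/eqP; ring.
Qed.

End Main.

Lemma porbit2 (T : finType) (s : {perm T}) z :
  (#|porbit s z| == 2) = (s z != z) && (s (s z) == z).
Proof.
apply/eqP/andP => [h|[h1 /eqP h2]].
  have u := uniq_traject_porbit s z; rewrite h /= andbT inE in u.
  have i := iter_porbit s z; rewrite h /= in i.
  by split; [rewrite eq_sym|apply/eqP].
have -> : porbit s z = [set z; s z].
  apply/setP => w; apply/idP/idP.
    move/porbitP=> [i ->]; rewrite permX; elim: i => [|i IH] /=; first by rewrite !inE eqxx.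
    by move: IH; rewrite !inE => /orP[] /eqP ->; rewrite ?h2 eqxx ?orbT.
  rewrite !inE => /orP[] /eqP ->; first exact: porbit_id.
  by have := mem_porbit s 1 z; rewrite expg1.
by rewrite cards2 eq_sym h1.
Qed.

Lemma A_eq N : [set a : {perm 'I_N} | all_cycles_length 2 a] = MV [set: 'I_N].
Proof.
apply/setP => a; rewrite !inE /all_cycles_length.
by apply: eq_forallb => z; rewrite porbit2 inE.
Qed.

Lemma f1_k N k (bt : {perm 'I_N}) : (2 <= k)%N -> all_cycles_length k bt -> f1 bt = 0%N.
Proof.
move=> hk /forallP H; apply/eqP; rewrite cards_eq0; apply/eqP/setP => z; rewrite !inE.
apply/negP => /eqP hz.
have : porbit bt z = [set z].
  apply/setP => w; rewrite inE; apply/idP/idP.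
    by move/porbitP=> [i ->]; rewrite (permX_fix _ hz).
  by move/eqP ->; exact: porbit_id.
by move=> e; move: (H z); rewrite e cards1 => /eqP hk1; move: hk; rewrite -hk1.
Qed.

Unset Implicit Arguments.
Import Order.TTheory GRing.Theory Num.Theory.

(* In MathComp, (a * b) x = b (a x): first a, then b, as in the paper. *)
Theorem theorem1p2 (R : rcfType) (k : nat) (hk : (3 <= k)%N) :
  exists C : R, exists N0 : nat,
    forall N : nat, (N0 <= N)%N -> (0 < N)%N -> (lcmn 2 k %| N)%N ->
    forall beta : {perm 'I_N}, all_cycles_length k beta ->
    forall t : nat,
      (unif_prob R [set a : {perm 'I_N} | all_cycles_length 2 a]
                   (fun a => (t <= ncycles (a * beta))%N)
       <= C * (Num.sqrt (2 / 3)) ^+ t * N%:R)%R.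
Proof.
exists 2%R, 0%N => N _ N0 _ beta hb t.
set x := Num.sqrt (3 / 2 : R).
set y := Num.sqrt x.
have x0 : (0 <= x)%R by apply: sqrtr_ge0.
have hx2 : (x ^+ 2 = 3 / 2 :> R)%R by rewrite sqr_sqrtr // divr_ge0 ?ler0n.
have hy2 : (y ^+ 2 = x)%R by rewrite sqr_sqrtr.
have hy1 : (1 <= y)%R.
  have h1x : (1 <= x)%R by rewrite /x -[X in (X <= _)%R]sqrtr1 ler_sqrt ?divr_ge0 ?ler0n //; lra.
  by rewrite /y -[X in (X <= _)%R]sqrtr1 ler_sqrt.
have hy4 : (y ^+ 4 = 1 + 2^-1 :> R)%R.
  by rewrite -[4%N]/(2 * 2)%N exprM hy2 hx2; field.
have hq : (Num.sqrt (2 / 3 : R) * x = 1)%R.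
  rewrite /x -sqrtrM; last lra.
  by rewrite (_ : (2 / 3 * (3 / 2) : R) = 1)%R ?sqrtr1 //; field.
set A := [set a : {perm 'I_N} | all_cycles_length 2 a].
set E := [set a in A | (t <= ncycles (a * beta))%N].
have hmain := main_aux hy1 hy4 (leqnn _) (V := [set: 'I_N]) (bt := beta) (fun z (hz : z \notin [set: 'I_N]) => False_ind _ (negP hz (in_setT z))).
rewrite (f1_k (k:=k)) ?(leq_trans _ hk) // cardsT card_ord add0n subnn expr0 mulr1 in hmain.
rewrite -A_eq -/A in hmain.
have cA : (#|A|%:R = (mm N)%:R :> R)%R by rewrite /A A_eq card_MV cardsT card_ord.
have Ebound : (#|E|%:R * y ^+ (2 * t) <= #|A|%:R * N.+1%:R :> R)%R.
  rewrite cA; apply: le_trans hmain.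
  rewrite mulr_natl -sumr_const.
  apply: (@le_trans _ _ (\sum_(a in E) y ^+ (2 * CC (a * beta)%g))%R).
    apply: ler_sum => a; rewrite inE => /andP[_ ht].
    by apply: yexp_le => //; rewrite leq_mul2l.
  rewrite [X in (_ <= X)%R](big_setID E) /=.
  have -> : A :&: E = E by apply/setIidPr; apply/subsetP => a; rewrite inE => /andP[].
  rewrite lerDl; apply: sumr_ge0 => a _; apply: exprn_ge0; apply: le_trans hy1; exact: ler01.
rewrite /unif_prob -/A -/E.
case: (eqVneq #|A| 0%N) => [->|nA].
  by rewrite invr0 mulr0 !mulr_ge0 ?ler0n ?exprn_ge0 ?sqrtr_ge0.
have Ap : (0 < #|A|%:R :> R)%R by rewrite ltr0n lt0n.
rewrite ler_pdivrMr //.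
have hyt : (y ^+ (2 * t) = x ^+ t)%R by rewrite exprM hy2.
rewrite hyt in Ebound.
have e1 : (#|E|%:R = Num.sqrt (2/3) ^+ t * (#|E|%:R * x ^+ t) :> R)%R.
  by rewrite mulrCA -exprMn hq expr1n mulr1.
rewrite e1.
apply: le_trans (ler_wpM2l (exprn_ge0 _ (sqrtr_ge0 _)) Ebound) _.
have hN : (N.+1%:R <= 2 * N%:R :> R)%R by rewrite -natrM ler_nat; lia.
set q := (Num.sqrt (2 / 3) ^+ t)%R.
have q0 : (0 <= q)%R by rewrite /q exprn_ge0 // sqrtr_ge0.
have -> : (2 * q * N%:R * #|A|%:R = q * (#|A|%:R * (2 * N%:R)))%R by ring.
by apply: ler_wpM2l => //; apply: ler_wpM2l => //; rewrite ler0n.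
Qed.
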